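(* Let $\phi:[0,\infty)\to[0,\infty)$ be an increasing bijection such that $\sum_{k=1}^\infty\frac{1}{1\vee\log(\phi^{-1}(k))}=\infty$. Then there exist an increasing bijection $\psi:[0,\infty)\to[0,\infty)$ with $\psi(x)\leq\phi(x)$ and $\psi(x)\leq\sqrt{x}$ for every $x\geq0$, and a strictly increasing function $a:\mathbb{N}\to\mathbb{N}$ satisfying \[ \lim_{k\to\infty}\big(a(k)-a(k-1)\big)=+\infty \qquad\text{and}\qquad \sum_{k=1}^\infty\frac{1}{1\vee\log(\psi^{-1}(a(k)))}=\infty, \] such that every sequence $(z_n)_{n\geq0}$ of positive reals satisfying $\limsup_{n\to\infty}e^{\phi(n)}z_n<\infty$ satisfies \[ \liminf_{k\to\infty}\frac1k\#\{1\leq r\leq k: z\text{ is }\psi\text{-good on scale }a(r)\}\geq\frac12 . \]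
   Context: For a positive sequence $z=(z_n)_{n\geq0}$ with $z_n\to0$, let $z_n^*=\min_{0\leq m\leq n}z_m$ and $k_0=\lceil 2\log z_0^{-1}\rceil$. For $k\geq k_0$ let $D_k=(\{z_m^*:m\geq1\}\cap[e^{-k-1},e^{-k}])\cup\{e^{-k},e^{-k-1}\}$, $N_k=|D_k|-1$, and list the elements of $D_k$ in decreasing order as $e^{-k}=d_{0,k}>d_{1,k}>\dots>d_{N_k,k}=e^{-k-1}$. For an increasing function $\psi$, write $\psi^{-1}(x)=\min\{y\geq0:\psi(y)\geq x\}$. For $k\geq k_0$, $z$ is $\psi$-good on scale $k$ if \[ \prod\Big\{\tfrac{d_{i+1,k}}{d_{i,k}}:0\leq i<N_k,\ \tfrac{d_{i+1,k}}{d_{i,k}}\leq\exp\big[-\tfrac{k}{2\psi^{-1}(k)}\big]\Big\}\leq e^{-1/2}. \] (Goodness is only defined for scales $k\geq k_0$; the finitely many scales $a(r)<k_0$ do not affect the $\liminf$.) $\phi^{-1}$ is the inverse of $\phi$. *)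

(* Defs.v *)
From Stdlib Require Import Reals Lra Lia List ClassicalEpsilon.
From Coquelicot Require Import Coquelicot.
Open Scope R_scope.

(* f : [0,oo) -> [0,oo) is an increasing bijection (f given as a total
   function R -> R; only its values on [0,oo) matter). *)
Definition inc_bij (f : R -> R) : Prop :=
  (forall x, 0 <= x -> 0 <= f x) /\
  (forall x y, 0 <= x -> x < y -> f x < f y) /\
  (forall y, 0 <= y -> exists x, 0 <= x /\ f x = y).

(* psi^{-1}(x) = min { y >= 0 : psi y >= x }  (taken as the infimum,
   which is the minimum whenever the minimum exists). *)
Definition geninv (psi : R -> R) (x : R) : R :=
  real (Glb_Rbar (fun y => 0 <= y /\ x <= psi y)).

Fixpoint zstar (z : nat -> R) (n : nat) : R :=
  match n with
  | O => z O
  | S n' => Rmin (zstar z n') (z (S n'))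
  end.

Definition ceilZ (x : R) : Z := (- Int_part (- x))%Z.

Definition k0 (z : nat -> R) : Z := ceilZ (2 * ln (/ z O)).

Definition Dk (z : nat -> R) (k : nat) (d : R) : Prop :=
  (exists m, (1 <= m)%nat /\ d = zstar z m /\
             exp (- (INR k + 1)) <= d <= exp (- INR k))
  \/ d = exp (- INR k) \/ d = exp (- (INR k + 1)).

Fixpoint strictly_decreasing (l : list R) : Prop :=
  match l with
  | d :: ((d' :: _) as tl) => d' < d /\ strictly_decreasing tl
  | _ => True
  end.

Fixpoint gap_prod (t : R) (l : list R) : R :=
  match l with
  | d :: ((d' :: _) as tl) =>
      (if Rle_dec (d' / d) t then d' / d else 1) * gap_prod t tl
  | _ => 1
  end.

(* z is psi-good on scale k (only defined for k >= k_0; we count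
   scales k < k_0 as not good, which does not affect the liminf) *)
Definition good (psi : R -> R) (z : nat -> R) (k : nat) : Prop :=
  (k0 z <= Z.of_nat k)%Z /\
  exists l : list R,
    strictly_decreasing l /\ (forall d, In d l <-> Dk z k d) /\
    gap_prod (exp (- (INR k / (2 * geninv psi (INR k))))) l <= exp (- (1/2)).

Fixpoint count_upto (P : nat -> Prop) (k : nat) : nat :=
  match k with
  | O => O
  | S k' => (count_upto P k' +
             (if excluded_middle_informative (P k) then 1 else 0))%nat
  end.

(* Main.v *)
Require Import Defs.
From Stdlib Require Import Reals Lra Lia List ClassicalEpsilon ZArith.
From Coquelicot Require Import Coquelicot.
Open Scope R_scope.

Lemma inc_le (f : R -> R) : inc_bij f -> forall x y, 0 <= x -> x <= y -> f x <= f y.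
Proof. intros [_ [H _]] x y Hx Hxy. destruct (Req_dec x y); [subst; lra|].
  apply Rlt_le, H; lra. Qed.

Lemma inc_rev (f : R -> R) : inc_bij f -> forall x y, 0 <= x -> 0 <= y -> f x <= f y -> x <= y.
Proof. intros [_ [H _]] x y Hx Hy Hf. destruct (Rle_lt_dec x y); auto.
  specialize (H y x Hy r). lra. Qed.

Lemma geninv_eq (f : R -> R) y x : inc_bij f -> 0 <= x -> f x = y -> geninv f y = x.
Proof. intros Hf Hx Hfx. unfold geninv.
  rewrite (is_glb_Rbar_unique _ (Finite x)); [reflexivity|].
  split.
  - intros w [Hw1 Hw2]. simpl. apply (inc_rev f Hf); auto; lra.
  - intros b Hb. apply Hb. split; auto; lra.
Qed.

Lemma geninv_spec (f : R -> R) y : inc_bij f -> 0 <= y -> 0 <= geninv f y /\ f (geninv f y) = y.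
Proof. intros Hf Hy. destruct Hf as [H1 [H2 H3]] eqn:E. destruct (H3 y Hy) as [x [Hx Hfx]].
  rewrite (geninv_eq f y x); auto. Qed.

Lemma geninv_le (f : R -> R) y m : inc_bij f -> 0 <= y -> 0 <= m -> f m <= y -> m <= geninv f y.
Proof. intros Hf Hy Hm Hfm. destruct (geninv_spec f y Hf Hy) as [A B].
  apply (inc_rev f Hf); auto; lra. Qed.

Lemma geninv_mono (f : R -> R) x y : inc_bij f -> 0 <= x -> x <= y -> geninv f x <= geninv f y.
Proof. intros Hf Hx Hxy. destruct (geninv_spec f x Hf Hx) as [A B].
  destruct (geninv_spec f y Hf ltac:(lra)) as [C D].
  apply geninv_le; auto; lra. Qed.

Definition mkpsi (phi : R -> R) (x : R) : R :=
  Rmin (phi x) (Rmin (sqrt (x/2)) (phi (sqrt (x/2)) / 2)).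

Definition Gf (phi : R -> R) (y : R) : R :=
  Rmax (geninv phi y) (Rmax (2*(y*y)) (2 * (geninv phi (2*y) * geninv phi (2*y)))).

Lemma Rmin_lt a b c d : a < c -> b < d -> Rmin a b < Rmin c d.
Proof. intros. unfold Rmin; repeat destruct Rle_dec; lra. Qed.

Lemma sqrt_sq_half x : 0 <= x -> sqrt ((2 * (x*x)) / 2) = x.
Proof. intros. replace (2*(x*x)/2) with (x*x) by field. apply sqrt_square; auto. Qed.

Lemma psi_val phi y : inc_bij phi -> 0 <= y -> mkpsi phi (Gf phi y) = y.
Proof. intros Hf Hy.
  destruct (geninv_spec phi y Hf Hy) as [A1 A2].
  destruct (geninv_spec phi (2*y) Hf ltac:(lra)) as [B1 B2].
  set (p1 := geninv phi y) in *. set (p2 := geninv phi (2*y)) in *.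
  unfold Gf, mkpsi. fold p1 p2.
  set (x := Rmax p1 (Rmax (2*(y*y)) (2*(p2*p2)))).
  assert (X1 : p1 <= x) by (unfold x; apply Rmax_l).
  assert (X2 : 2*(y*y) <= x) by (unfold x; eapply Rle_trans; [apply Rmax_l|apply Rmax_r]).
  assert (X3 : 2*(p2*p2) <= x) by (unfold x; eapply Rle_trans; [apply Rmax_r|apply Rmax_r]).
  assert (S1 : y <= sqrt (x/2)). { rewrite <- (sqrt_sq_half y) at 1 by lra. apply sqrt_le_1; nra. }
  assert (S2 : p2 <= sqrt (x/2)). { rewrite <- (sqrt_sq_half p2) at 1 by lra. apply sqrt_le_1; nra. }
  assert (F1 : y <= phi x) by (rewrite <- A2; apply (inc_le phi Hf); lra).
  assert (F2 : 2*y <= phi (sqrt (x/2))) by (rewrite <- B2; apply (inc_le phi Hf); lra).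
  assert (E : x = p1 \/ x = 2*(y*y) \/ x = 2*(p2*p2)).
  { unfold x, Rmax. repeat destruct Rle_dec; auto. }
  destruct E as [E|[E|E]].
  - rewrite E at 1. rewrite A2. unfold Rmin. repeat destruct Rle_dec; lra.
  - assert (sqrt (x/2) = y) by (rewrite E; apply sqrt_sq_half; lra).
    rewrite H in *. unfold Rmin. repeat destruct Rle_dec; lra.
  - assert (sqrt (x/2) = p2) by (rewrite E; apply sqrt_sq_half; lra).
    rewrite H, B2. unfold Rmin. repeat destruct Rle_dec; lra.
Qed.

Lemma psi_bij phi : inc_bij phi -> inc_bij (mkpsi phi).
Proof. intros Hf. pose proof Hf as [H1 [H2 H3]]. split; [|split].
  - intros x Hx. unfold mkpsi. pose proof (sqrt_pos (x/2)).
    pose proof (H1 x Hx). pose proof (H1 _ H).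
    unfold Rmin. repeat destruct Rle_dec; lra.
  - intros x y Hx Hxy. unfold mkpsi. apply Rmin_lt; [apply H2; auto|].
    assert (sqrt (x/2) < sqrt (y/2)) by (apply sqrt_lt_1; lra).
    apply Rmin_lt; auto. assert (phi (sqrt (x/2)) < phi (sqrt (y/2))) by (apply H2; auto; apply sqrt_pos). lra.
  - intros y Hy. exists (Gf phi y). split; [|apply psi_val; auto].
    unfold Gf. eapply Rle_trans; [|apply Rmax_r]. eapply Rle_trans; [|apply Rmax_l]. nra.
Qed.

Lemma geninv_psi phi y : inc_bij phi -> 0 <= y -> geninv (mkpsi phi) y = Gf phi y.
Proof. intros Hf Hy. apply geninv_eq; [apply psi_bij; auto| |apply psi_val; auto].
  unfold Gf. eapply Rle_trans; [|apply Rmax_r]. eapply Rle_trans; [|apply Rmax_l]. nra. Qed.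

Lemma psi_le_phi phi x : mkpsi phi x <= phi x.
Proof. apply Rmin_l. Qed.

Lemma psi_le_sqrt phi x : 0 <= x -> mkpsi phi x <= sqrt x.
Proof. intros Hx. unfold mkpsi. eapply Rle_trans; [apply Rmin_r|]. eapply Rle_trans; [apply Rmin_l|].
  apply sqrt_le_1; lra. Qed.

Fixpoint ins (x : R) (l : list R) : list R :=
  match l with
  | nil => x :: nil
  | y :: tl => if Rlt_dec y x then x :: y :: tl else y :: ins x tl
  end.

Lemma In_ins x l y : In y (ins x l) <-> y = x \/ In y l.
Proof. induction l as [|a tl IH]; simpl.
  - split; intros [H|H]; subst; auto.
  - destruct Rlt_dec; simpl; [|rewrite IH]; split; intros H;
    repeat destruct H as [H|H]; subst; auto. Qed.

Lemma length_ins x l : length (ins x l) = S (length l).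
Proof. induction l; simpl; auto. destruct Rlt_dec; simpl; auto. Qed.

Lemma sd_cons_iff l : forall y, strictly_decreasing (y :: l) <->
  strictly_decreasing l /\ List.Forall (fun w => w < y) l.
Proof. induction l as [|a tl IH]; intros y.
  - simpl. split; auto.
  - change (strictly_decreasing (y :: a :: tl)) with (a < y /\ strictly_decreasing (a :: tl)).
    rewrite (IH a). split.
    + intros [H1 [H2 H3]]. split; [split; auto|]. constructor; auto.
      rewrite List.Forall_forall in *. intros w Hw. specialize (H3 w Hw). lra.
    + intros [[H2 H3] H4]. inversion H4; subst. auto.
Qed.

Lemma sd_ins x l : strictly_decreasing l -> ~ In x l -> strictly_decreasing (ins x l).
Proof. induction l as [|y tl IH]; intros Hs Hn.
  - simpl. auto.
  - simpl. destruct Rlt_dec as [r|r].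
    + change (strictly_decreasing (x :: y :: tl)) with (y < x /\ strictly_decreasing (y :: tl)). auto.
    + apply sd_cons_iff in Hs. destruct Hs as [Hs Hf]. apply sd_cons_iff. split.
      * apply IH; auto. intro; apply Hn; simpl; auto.
      * rewrite List.Forall_forall in *. intros w Hw. apply In_ins in Hw. destruct Hw as [->|Hw]; auto.
        assert (x <> y) by (intro; subst; apply Hn; simpl; auto). lra.
Qed.

Lemma build (Q : R -> Prop) (L : list R) : exists l, strictly_decreasing l /\
  (forall d, In d l <-> In d L /\ Q d) /\ (length l <= length L)%nat.
Proof. induction L as [|x L IH].
  - exists nil. simpl. split; auto. split; [tauto|lia].
  - destruct IH as [l [H1 [H2 H3]]].
    destruct (classic (Q x /\ ~ In x l)) as [[Hq Hn]|Hc].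
    + exists (ins x l). split; [apply sd_ins; auto|]. split.
      * intros w. rewrite In_ins, H2. simpl. split; [intros [->|[A B]]; auto|].
        intros [[<-|A] B]; auto.
      * rewrite length_ins. simpl. lia.
    + exists l. split; auto. split; [|simpl; lia].
      intros w. rewrite H2. simpl. split; [tauto|]. intros [[<-|A] B]; auto.
      destruct (classic (In x l)) as [C|C]; [apply H2 in C; tauto|]. exfalso; apply Hc; auto.
Qed.

Fixpoint bp (t : R) (l : list R) : R :=
  match l with
  | d :: ((d' :: _) as tl) =>
      (if Rle_dec (d' / d) t then 1 else d' / d) * bp t tl
  | _ => 1
  end.

Lemma last_cons_indep (l : list R) : forall a d, last (a :: l) d = last l a.
Proof. induction l as [|b l IH]; intros a d; [reflexivity|].
  change (last (a :: b :: l) d) with (last (b :: l) d). rewrite !IH. reflexivity. Qed.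

Lemma gp_bp t tl : forall d, (forall w, In w (d :: tl) -> 0 < w) ->
  gap_prod t (d :: tl) * bp t (d :: tl) = last tl d / d.
Proof. induction tl as [|d' tl IH]; intros d Hp.
  - simpl. assert (0 < d) by (apply Hp; simpl; auto). field. lra.
  - change (gap_prod t (d :: d' :: tl)) with
      ((if Rle_dec (d' / d) t then d' / d else 1) * gap_prod t (d' :: tl)).
    change (bp t (d :: d' :: tl)) with
      ((if Rle_dec (d' / d) t then 1 else d' / d) * bp t (d' :: tl)).
    rewrite last_cons_indep.
    assert (E : (if Rle_dec (d' / d) t then d' / d else 1) * (if Rle_dec (d' / d) t then 1 else d' / d) = d'/d)
      by (destruct Rle_dec; ring).
    transitivity ((if Rle_dec (d' / d) t then d' / d else 1) * (if Rle_dec (d' / d) t then 1 else d' / d)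
       * (gap_prod t (d' :: tl) * bp t (d' :: tl))); [ring|].
    rewrite E, IH. assert (0 < d) by (apply Hp; simpl; auto). assert (0 < d') by (apply Hp; simpl; auto).
    field. lra. intros w Hw; apply Hp; simpl in *; tauto.
Qed.

Lemma bp_lb t tl : 0 < t <= 1 -> forall d, (forall w, In w (d :: tl) -> 0 < w) ->
  0 < bp t (d :: tl) /\ t ^ (length tl) <= bp t (d :: tl).
Proof. intros Ht. induction tl as [|d' tl IH]; intros d Hp.
  - simpl. lra.
  - change (bp t (d :: d' :: tl)) with
      ((if Rle_dec (d' / d) t then 1 else d' / d) * bp t (d' :: tl)).
    destruct (IH d') as [A B]. intros w Hw; apply Hp; simpl in *; tauto.
    assert (0 < d) by (apply Hp; simpl; auto). assert (0 < d') by (apply Hp; simpl; auto).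
    assert (0 < d'/d) by (apply Rdiv_lt_0_compat; auto).
    assert (F : 0 < (if Rle_dec (d' / d) t then 1 else d' / d) /\ t <= (if Rle_dec (d' / d) t then 1 else d' / d))
      by (destruct Rle_dec; lra).
    destruct F as [F1 F2]. simpl length. rewrite <- tech_pow_Rmult. split.
    + apply Rmult_lt_0_compat; auto.
    + apply Rmult_le_compat; auto; try lra. apply pow_le; lra.
Qed.

Lemma head_max d tl w : strictly_decreasing (d :: tl) -> In w (d :: tl) -> w <= d.
Proof. intros Hs Hw. apply sd_cons_iff in Hs. destruct Hs as [_ Hf].
  destruct Hw as [->|Hw]; [lra|]. rewrite List.Forall_forall in Hf. apply Rlt_le, Hf; auto. Qed.

Lemma last_min tl : forall d w, strictly_decreasing (d :: tl) -> In w (d :: tl) -> last tl d <= w.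
Proof. induction tl as [|d' tl IH]; intros d w Hs Hw.
  - simpl in Hw. destruct Hw as [->|[]]. simpl. lra.
  - rewrite last_cons_indep. change (strictly_decreasing (d :: d' :: tl)) with (d' < d /\ strictly_decreasing (d' :: tl)) in Hs.
    destruct Hs as [H1 H2]. destruct Hw as [<-|Hw].
    + specialize (IH d' d' H2 (or_introl eq_refl)). lra.
    + apply IH; auto.
Qed.

Lemma In_last tl : forall d : R, In (last tl d) (d :: tl).
Proof. induction tl as [|d' tl IH]; intros d; [simpl; auto|].
  rewrite last_cons_indep. right. apply IH. Qed.

Lemma pow_decr t n m : 0 <= t <= 1 -> (n <= m)%nat -> t ^ m <= t ^ n.
Proof. intros Ht Hnm. replace m with (n + (m - n))%nat by lia. rewrite pow_add.
  assert (0 <= t ^ n) by (apply pow_le; lra).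
  assert (t ^ (m - n) <= 1) by (rewrite <- (pow1 (m - n)); apply pow_incr; lra).
  assert (0 <= t ^ (m-n)) by (apply pow_le; lra). nra. Qed.

Lemma gp_bound t l lo hi n : 0 < t <= 1 -> strictly_decreasing l -> (forall w, In w l -> 0 < w) ->
  In hi l -> In lo l -> (length l <= S n)%nat -> gap_prod t l <= (lo / hi) / t ^ n.
Proof. intros Ht Hs Hp Hhi Hlo Hlen. destruct l as [|d tl]; [destruct Hhi|].
  pose proof (gp_bp t tl d Hp) as E. destruct (bp_lb t tl Ht d Hp) as [B1 B2].
  assert (Hd : 0 < d) by (apply Hp; simpl; auto).
  assert (Hhi0 : 0 < hi) by auto. assert (Hlo0 : 0 < lo) by auto.
  assert (L1 : last tl d <= lo) by (apply last_min; auto).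
  assert (L0 : 0 < last tl d) by (apply Hp, In_last).
  assert (H1 : hi <= d) by (apply head_max with tl; auto).
  assert (T : t ^ n <= bp t (d :: tl)). { eapply Rle_trans; [|apply B2]. apply pow_decr; [lra|]. simpl in Hlen; lia. }
  assert (Tn : 0 < t ^ n) by (apply pow_lt; lra).
  assert (G : gap_prod t (d :: tl) = last tl d / d / bp t (d :: tl)) by (rewrite <- E; field; lra).
  rewrite G. unfold Rdiv. rewrite !Rmult_assoc. apply Rmult_le_compat; try lra.
  - apply Rmult_le_pos; left; apply Rinv_0_lt_compat; auto.
  - rewrite <- !Rinv_mult. apply Rinv_le_contravar; [nra|]. apply Rmult_le_compat; lra.
Qed.

Lemma exp_le_mono x y : x <= y -> exp x <= exp y.
Proof. intros H. destruct (Req_dec x y); [subst; lra|]. left; apply exp_increasing; lra. Qed.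

Lemma exp_pow x n : exp x ^ n = exp (INR n * x).
Proof. induction n; simpl. rewrite Rmult_0_l, exp_0; auto.
  rewrite IHn, <- exp_plus. f_equal. destruct n; simpl; ring. Qed.

Lemma good_scale psi z (k K : nat) :
  (forall m, (1 <= m)%nat -> exp (- (INR k + 1)) <= zstar z m -> (m <= K)%nat) ->
  (k0 z <= Z.of_nat k)%Z -> (1 <= k)%nat ->
  INR (S K) * INR k <= geninv psi (INR k) ->
  good psi z k.
Proof. intros Hm Hk0 Hk1 HG. split; auto.
  set (L := exp (- INR k) :: exp (- (INR k + 1)) :: map (zstar z) (seq 1 K)).
  destruct (build (Dk z k) L) as [l [Hs [Hin Hlen]]].
  assert (Hin' : forall d, In d l <-> Dk z k d).
  { intros d. rewrite Hin. split; [tauto|]. intros HD. split; auto.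
    destruct HD as [[m [Hm1 [Hd Hr]]]|[Hd|Hd]]; subst d; unfold L; simpl; auto.
    right; right. apply in_map_iff. exists m. split; auto. apply in_seq.
    specialize (Hm m Hm1 (proj1 Hr)). lia. }
  exists l. split; auto. split; auto.
  assert (Hkpos : 1 <= INR k) by (apply (le_INR 1); auto).
  set (G := geninv psi (INR k)) in *.
  assert (HSK : 1 <= INR (S K)) by (apply (le_INR 1); lia).
  assert (HG0 : 0 < G) by nra.
  set (t := exp (- (INR k / (2 * G)))).
  assert (Ht : 0 < t <= 1).
  { split; [apply exp_pos|]. rewrite <- exp_0. apply exp_le_mono.
    assert (0 <= INR k / (2*G)) by (apply Rdiv_le_0_compat; lra). lra. }
  assert (Hpos : forall w, In w l -> 0 < w).
  { intros w Hw. apply Hin' in Hw. pose proof (exp_pos (- (INR k + 1))).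
    destruct Hw as [[m [_ [_ Hr]]]|[ -> | -> ]]; try lra; apply exp_pos. }
  assert (Hb : gap_prod t l <= (exp (- (INR k + 1)) / exp (- INR k)) / t ^ (S K)).
  { apply gp_bound; auto; try (apply Hin'; right; auto).
    unfold L in Hlen. simpl in Hlen. rewrite length_map, length_seq in Hlen. lia. }
  eapply Rle_trans; [apply Hb|]. unfold t. rewrite exp_pow.
  unfold Rdiv. rewrite <- !exp_Ropp, <- !exp_plus.
  apply exp_le_mono.
  assert (INR (S K) * (INR k * / (2 * G)) <= 1/2).
  { replace (INR (S K) * (INR k * / (2 * G))) with ((INR (S K) * INR k) / (2 * G)) by (field; lra).
    apply Rmult_le_reg_r with (2*G); [lra|]. unfold Rdiv. rewrite Rmult_assoc, Rinv_l by lra. lra. }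
  lra.
Qed.

Fixpoint psum (f : nat -> R) (n : nat) : R :=
  match n with O => 0 | S n' => psum f n' + f n' end.

Lemma psum_S f n : psum f (S n) = psum f n + f n.
Proof. reflexivity. Qed.

Definition nfl (x : R) : nat := Z.to_nat (Int_part x).

Lemma nfl_spec x : 0 <= x -> INR (nfl x) <= x < INR (nfl x) + 1.
Proof. intros Hx. destruct (base_Int_part x) as [A B].
  assert (Hp : (0 <= Int_part x)%Z). { assert (-1 < IZR (Int_part x)) by lra.
    apply lt_IZR in H. lia. }
  unfold nfl. rewrite INR_IZR_INZ, Z2Nat.id by auto. lra. Qed.

Lemma nfl_mono x y : 0 <= x -> x <= y -> (nfl x <= nfl y)%nat.
Proof. intros Hx Hxy. destruct (nfl_spec x Hx). destruct (nfl_spec y ltac:(lra)).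
  assert (INR (nfl x) < INR (nfl y + 1)) by (rewrite plus_INR; simpl; lra).
  apply INR_lt in H3. lia. Qed.

Lemma psum_mono f : (forall k, 0 <= f k) -> forall n m, (n <= m)%nat -> psum f n <= psum f m.
Proof. intros Hf n m Hnm. induction Hnm; [lra|]. simpl. specialize (Hf m). lra. Qed.

Lemma psum_nonneg f : (forall k, 0 <= f k) -> forall n, 0 <= psum f n.
Proof. intros Hf n. apply (psum_mono f Hf 0 n). lia. Qed.

Section Construct.
Variable h : nat -> R.
Hypothesis hpos : forall k, 0 < h k.
Hypothesis hdec : forall k k', (k <= k')%nat -> h k' <= h k.
Hypothesis hunb : forall M, exists n, M <= psum h n.

Let S n := psum h n.
Definition gap (k : nat) : nat := Datatypes.S (nfl (sqrt (psum h (Datatypes.S k)))).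
Fixpoint aseq (r : nat) : nat := match r with O => O | Datatypes.S r' => (aseq r' + gap (aseq r'))%nat end.
Let W n := psum (fun k => h k / INR (gap k)) n.

Lemma S_nonneg n : 0 <= psum h n.
Proof. apply psum_nonneg. intros; left; auto. Qed.

Lemma gap_spec k : 1 <= INR (gap k) /\ INR (gap k) <= 1 + sqrt (psum h (Datatypes.S k))
   /\ sqrt (psum h (Datatypes.S k)) < INR (gap k).
Proof. unfold gap. rewrite S_INR. destruct (nfl_spec (sqrt (psum h (Datatypes.S k)))) as [A B].
  apply sqrt_pos. pose proof (pos_INR (nfl (sqrt (psum h (Datatypes.S k))))). lra. Qed.

Lemma gap_mono k k' : (k <= k')%nat -> (gap k <= gap k')%nat.
Proof. intros H. unfold gap. apply le_n_S, nfl_mono; [apply sqrt_pos|].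
  apply sqrt_le_1; try apply S_nonneg. apply psum_mono; [intros; left; auto|lia]. Qed.

Lemma W_lb n : sqrt (1 + psum h n) - 1 <= W n.
Proof. induction n.
  - unfold W. simpl. rewrite Rplus_0_r, sqrt_1. lra.
  - unfold W in *. rewrite !psum_S.
    destruct (gap_spec n) as [G1 [G2 G3]]. rewrite psum_S in G2, G3.
    set (s := psum h n) in *. set (g := INR (gap n)) in *.
    assert (Hs : 0 <= s) by apply S_nonneg. pose proof (hpos n).
    set (u := sqrt (1 + (s + h n))). set (v := sqrt (1 + s)).
    assert (Hu : u * u = 1 + (s + h n)) by (apply sqrt_sqrt; lra).
    assert (Hv : v * v = 1 + s) by (apply sqrt_sqrt; lra).
    assert (Hv1 : 1 <= v) by (apply Rle_trans with (sqrt 1); [rewrite sqrt_1; lra|apply sqrt_le_1; lra]).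
    assert (Huv : v <= u) by (apply sqrt_le_1; lra).
    assert (Hsu : sqrt (s + h n) <= u) by (apply sqrt_le_1; lra).
    assert (Hg : g <= u + v) by lra.
    assert (u - v <= h n / g).
    { apply Rmult_le_reg_r with g; [lra|]. unfold Rdiv. rewrite Rmult_assoc, Rinv_l by lra. nra. }
    fold v in IHn. lra.
Qed.

Lemma aseq_step r : aseq (Datatypes.S r) = (aseq r + gap (aseq r))%nat.
Proof. reflexivity. Qed.

Lemma aseq_ge r : (r <= aseq r)%nat.
Proof. induction r; simpl; [lia|]. unfold gap. lia. Qed.

Lemma W_block r : W (aseq (Datatypes.S r)) - W (aseq r) <= h (aseq r).
Proof. rewrite aseq_step. set (b := aseq r).
  destruct (gap_spec b) as [G1 _].
  assert (forall i, W (b + i)%nat - W b <= INR i * (h b / INR (gap b))).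
  { induction i. { rewrite Nat.add_0_r. simpl. lra. }
    replace (b + Datatypes.S i)%nat with (Datatypes.S (b + i)) by lia.
    unfold W in *. rewrite psum_S, S_INR.
    assert (h (b + i)%nat / INR (gap (b+i)) <= h b / INR (gap b)).
    { pose proof (hdec b (b+i)%nat ltac:(lia)). pose proof (hpos (b+i)%nat).
      pose proof (le_INR _ _ (gap_mono b (b+i)%nat ltac:(lia))).
      unfold Rdiv. apply Rmult_le_compat; try lra. left; apply Rinv_0_lt_compat; lra.
      apply Rinv_le_contravar; lra. }
    lra. }
  specialize (H (gap b)). replace (INR (gap b) * (h b / INR (gap b))) with (h b) in H by (field; lra).
  auto.
Qed.

Lemma sum_lb n : W (aseq (Datatypes.S (Datatypes.S n))) - W (aseq 1) <= sum_f_R0 (fun j => h (aseq (Datatypes.S j))) n.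
Proof. induction n.
  - cbn [sum_f_R0]. apply W_block.
  - cbn [sum_f_R0]. pose proof (W_block (Datatypes.S (Datatypes.S n))). lra. Qed.

Lemma construct_a : exists a : nat -> nat, (forall n, (a n < a (Datatypes.S n))%nat) /\
  is_lim_seq (fun j => INR (a (Datatypes.S j)) - INR (a j)) p_infty /\
  is_lim_seq (fun n => sum_f_R0 (fun j => h (a (Datatypes.S j))) n) p_infty.
Proof. exists aseq. split; [|split].
  - intros n. rewrite aseq_step. unfold gap. lia.
  - apply is_lim_seq_spec. intros M. destruct (hunb ((Rabs M + 1) * (Rabs M + 1))) as [N HN].
    exists N. intros j Hj. rewrite aseq_step, plus_INR.
    destruct (gap_spec (aseq j)) as [_ [_ G3]].
    assert ((Rabs M + 1) * (Rabs M + 1) <= psum h (Datatypes.S (aseq j))).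
    { eapply Rle_trans; [apply HN|]. apply psum_mono; [intros; left; auto|]. pose proof (aseq_ge j). lia. }
    assert (Rabs M + 1 <= sqrt (psum h (Datatypes.S (aseq j)))).
    { rewrite <- (sqrt_square (Rabs M + 1)) by (pose proof (Rabs_pos M); lra). apply sqrt_le_1; auto.
      pose proof (Rabs_pos M); nra. apply S_nonneg. }
    pose proof (Rle_abs M). lra.
  - apply is_lim_seq_spec. intros M. set (c := Rabs M + 2 + Rabs (W (aseq 1))).
    assert (Hc : 0 <= c) by (unfold c; pose proof (Rabs_pos M); pose proof (Rabs_pos (W (aseq 1))); lra).
    destruct (hunb (c * c)) as [N HN]. exists N. intros n Hn.
    eapply Rlt_le_trans; [|apply sum_lb].
    pose proof (W_lb (aseq (Datatypes.S (Datatypes.S n)))).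
    assert (c * c <= psum h (aseq (Datatypes.S (Datatypes.S n)))).
    { eapply Rle_trans; [apply HN|]. apply psum_mono; [intros; left; auto|].
      pose proof (aseq_ge (Datatypes.S (Datatypes.S n))). lia. }
    assert (c <= sqrt (1 + psum h (aseq (Datatypes.S (Datatypes.S n))))).
    { rewrite <- (sqrt_square c) by lra. pose proof (S_nonneg (aseq (Datatypes.S (Datatypes.S n)))). apply sqrt_le_1; nra. }
    unfold c in *. pose proof (Rle_abs M). pose proof (Rle_abs (W (aseq 1))). unfold W in *. lra.
Qed.
End Construct.

Lemma ln_0' : ln 0 = 0.
Proof. unfold ln. destruct Rlt_dec as [r|r]; [exfalso; apply (Rlt_irrefl 0); exact r|reflexivity]. Qed.

Lemma lnmax_mono x y : 0 <= x -> x <= y -> Rmax 1 (ln x) <= Rmax 1 (ln y).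
Proof. intros Hx Hxy. destruct (Req_dec x 0) as [->|Hx0].
  - rewrite ln_0'. apply Rmax_case_strong; intros; [apply Rmax_l|].
    eapply Rle_trans; [|apply Rmax_l]. lra.
  - assert (ln x <= ln y) by (apply ln_le; lra). unfold Rmax; repeat destruct Rle_dec; lra. Qed.

Lemma ln_lt_self x : 0 < x -> ln x < x.
Proof. intros Hx. assert (x < exp x) by (pose proof (exp_ineq1 x ltac:(lra)); lra).
  rewrite <- (ln_exp x) at 2. apply ln_increasing; auto. Qed.

Section H.
Variable phi : R -> R.
Hypothesis Hphi : inc_bij phi.

Definition Aa (k : nat) := Rmax 1 (ln (INR k)).
Definition Bn (j : nat) := Rmax 1 (ln (geninv phi (INR j))).
Definition hh (k : nat) := / Rmax (Aa k) (Bn (2 * k)).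

Lemma Aa_ge1 k : 1 <= Aa k. Proof. apply Rmax_l. Qed.
Lemma Bn_ge1 k : 1 <= Bn k. Proof. apply Rmax_l. Qed.

Lemma Aa_mono k k' : (k <= k')%nat -> Aa k <= Aa k'.
Proof. intros. apply lnmax_mono; [apply pos_INR|apply le_INR; auto]. Qed.

Lemma Bn_mono k k' : (k <= k')%nat -> Bn k <= Bn k'.
Proof. intros. apply lnmax_mono.
  - apply geninv_spec; auto; apply pos_INR.
  - apply geninv_mono; auto; [apply pos_INR|apply le_INR; auto]. Qed.

Lemma hh_pos k : 0 < hh k.
Proof. unfold hh. apply Rinv_0_lt_compat. pose proof (Aa_ge1 k). pose proof (Rmax_l (Aa k) (Bn (2*k))). lra. Qed.

Lemma hh_dec k k' : (k <= k')%nat -> hh k' <= hh k.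
Proof. intros H. unfold hh. pose proof (Aa_ge1 k). pose proof (Rmax_l (Aa k) (Bn (2*k))).
  apply Rinv_le_contravar; [lra|]. pose proof (Aa_mono k k' H). pose proof (Bn_mono (2*k) (2*k') ltac:(lia)).
  unfold Rmax; repeat destruct Rle_dec; lra. Qed.

Lemma psum_ge_last f k : (forall i j, (i <= j)%nat -> f j <= f i) -> INR (S k) * f k <= psum f (S k).
Proof. intros Hf. assert (forall i, (i <= S k)%nat -> INR i * f k <= psum f i).
  { induction i; intros Hi. simpl; lra. rewrite psum_S, S_INR. specialize (IHi ltac:(lia)).
    pose proof (Hf i k ltac:(lia)). lra. }
  apply H; lia. Qed.

Lemma psum_le_n f n : (forall k, f k <= 1) -> psum f n <= INR n.
Proof. intros Hf. induction n; simpl psum; [simpl; lra|]. rewrite S_INR. specialize (Hf n). lra. Qed.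

Lemma sumf_psum f n : sum_f_R0 (fun j => f (S j)) n = psum f (S (S n)) - f O.
Proof. induction n. simpl. ring. cbn [sum_f_R0]. rewrite IHn. rewrite (psum_S f (S (S n))). ring. Qed.

Lemma hh_unb : is_lim_seq (fun n => sum_f_R0
      (fun j => / Rmax 1 (ln (geninv phi (INR (S j))))) n) p_infty ->
  forall M, exists n, M <= psum hh n.
Proof. intros Hlim M.
  set (K1 := S (nfl (4 * (M * M) + 1))).
  assert (HK1 : 4 * (M * M) + 1 <= INR K1).
  { unfold K1. rewrite S_INR. destruct (nfl_spec (4 * (M*M) + 1)); nra. }
  destruct (classic (exists k, (K1 <= k)%nat /\ Bn (2*k) < Aa k)) as [[k [Hk HB]]|HA].
  - exists (S k). eapply Rle_trans; [|apply psum_ge_last; intros; apply hh_dec; auto].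
    unfold hh. rewrite Rmax_left by lra.
    assert (Hk1 : 4 * (M*M) + 1 <= INR k) by (eapply Rle_trans; [apply HK1|apply le_INR; auto]).
    set (s := sqrt (INR k)).
    assert (Hs : s * s = INR k) by (apply sqrt_sqrt; apply pos_INR).
    assert (Hs0 : 0 <= s) by apply sqrt_pos.
    assert (Hs1 : 1 <= s) by nra.
    assert (Hln : ln (INR k) <= 2 * s).
    { rewrite <- Hs. rewrite ln_mult by lra. pose proof (ln_lt_self s ltac:(lra)). lra. }
    assert (HA2 : Aa k <= 2 * s) by (unfold Aa; apply Rmax_lub; lra).
    pose proof (Aa_ge1 k).
    assert (HsM : 2 * Rabs M <= s).
    { apply Rsqr_incr_0_var; [|lra]. unfold Rsqr. rewrite Hs. assert (Rabs M * Rabs M = M * M) by (rewrite <- Rabs_mult; apply Rabs_right; apply Rle_ge; nra). nra. }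
    rewrite S_INR. apply Rmult_le_reg_r with (Aa k); [lra|]. rewrite Rmult_assoc, Rinv_l by lra.
    pose proof (Rle_abs M). pose proof (Rabs_pos M). nra.
  - assert (HA' : forall k, (K1 <= k)%nat -> Aa k <= Bn (2*k)).
    { intros k Hk. destruct (Rle_lt_dec (Aa k) (Bn (2*k))); auto. exfalso; apply HA; eauto. }
    set (Bs := psum (fun j => / Bn j)).
    assert (Hstep : forall d, Bs (2 * (K1 + d))%nat - Bs (2 * K1)%nat <= 2 * (psum hh (K1 + d) - psum hh K1)).
    { induction d. rewrite Nat.add_0_r. lra.
      replace (2 * (K1 + S d))%nat with (S (S (2 * (K1 + d)))) by lia.
      replace (K1 + S d)%nat with (S (K1 + d)) by lia.
      unfold Bs in *. rewrite !psum_S.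
      replace (hh (K1 + d)) with (/ Bn (2 * (K1 + d))) by (unfold hh; rewrite Rmax_right by (apply HA'; lia); reflexivity).
      pose proof (Bn_ge1 (2 * (K1 + d))). pose proof (Bn_ge1 (S (2 * (K1 + d)))).
      assert (/ Bn (S (2 * (K1 + d))) <= / Bn (2 * (K1 + d))) by (apply Rinv_le_contravar; [lra|apply Bn_mono; lia]).
      lra. }
    apply is_lim_seq_spec in Hlim. destruct (Hlim (2 * M + 4 * INR K1 + 2)) as [N HN].
    specialize (HN N (le_n N)). rewrite (sumf_psum (fun j => / Bn j)) in HN. fold Bs in HN.
    exists (K1 + (N + 2))%nat. specialize (Hstep (N + 2)%nat).
    assert (Bs (S (S N)) <= Bs (2 * (K1 + (N + 2)))%nat) by (apply psum_mono; [intros; left; apply Rinv_0_lt_compat; pose proof (Bn_ge1 k); lra|lia]).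
    assert (Bs (2 * K1)%nat <= INR (2 * K1)) by (apply psum_le_n; intros; pose proof (Bn_ge1 k); rewrite <- Rinv_1; apply Rinv_le_contravar; lra).
    rewrite mult_INR in H0. simpl (INR 2) in H0.
    assert (0 < / Bn 0) by (apply Rinv_0_lt_compat; pose proof (Bn_ge1 0); lra).
    assert (0 <= psum hh K1) by (apply psum_nonneg; intros; left; apply hh_pos).
    pose proof (pos_INR K1). lra.
Qed.

Lemma term_bound k : (1 <= k)%nat -> hh k / 3 <= / Rmax 1 (ln (Gf phi (INR k))).
Proof. intros Hk. unfold Gf, hh.
  replace (2 * INR k) with (INR (2 * k)) by (rewrite mult_INR; simpl; ring).
  set (y := INR k). assert (Hy : 1 <= y) by (apply (le_INR 1); auto).
  set (p := geninv phi (INR (2*k))). set (X := Rmax (Aa k) (Bn (2*k))).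
  assert (Hp0 : 0 <= p) by (apply geninv_spec; auto; apply pos_INR).
  assert (Hpy : geninv phi y <= p) by (apply geninv_mono; auto; [apply pos_INR|]; unfold y; apply le_INR; lia).
  assert (Hpy0 : 0 <= geninv phi y) by (apply geninv_spec; auto; apply pos_INR).
  set (M := Rmax y (Rmax p 1)).
  assert (M1 : y <= M) by apply Rmax_l.
  assert (M2 : p <= M) by (eapply Rle_trans; [apply Rmax_l|apply Rmax_r]).
  assert (M3 : 1 <= M) by (eapply Rle_trans; [apply Rmax_r|apply Rmax_r]).
  set (G := Rmax (geninv phi y) (Rmax (2 * (y * y)) (2 * (p * p)))).
  assert (G0 : 2 <= G) by (unfold G; eapply Rle_trans; [|apply Rmax_r]; eapply Rle_trans; [|apply Rmax_l]; nra).
  assert (G1 : G <= 2 * (M * M)) by (unfold G; repeat apply Rmax_lub; nra).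
  assert (X1 : 1 <= X) by (unfold X; eapply Rle_trans; [apply Aa_ge1|apply Rmax_l]).
  assert (LM : ln M <= X).
  { unfold M, Rmax at 1 2. destruct (Rle_dec p 1); destruct Rle_dec.
    - rewrite ln_1; lra.
    - eapply Rle_trans; [|apply Rmax_l]. apply Rmax_r.
    - eapply Rle_trans; [|apply Rmax_r]. apply Rmax_r.
    - eapply Rle_trans; [|apply Rmax_l]. apply Rmax_r. }
  assert (L2 : ln 2 < 1).
  { rewrite <- (ln_exp 1). apply ln_increasing; [lra|]. pose proof (exp_ineq1 1 ltac:(lra)). lra. }
  assert (LG : ln G <= ln 2 + 2 * ln M).
  { replace (2 * ln M) with (ln M + ln M) by ring. rewrite <- !ln_mult by nra. apply ln_le; nra. }
  assert (Rmax 1 (ln G) <= 3 * X) by (apply Rmax_lub; lra).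
  assert (0 < Rmax 1 (ln G)) by (pose proof (Rmax_l 1 (ln G)); lra).
  unfold Rdiv. rewrite <- (Rinv_inv 3), <- Rinv_mult. apply Rinv_le_contravar; [lra|]. lra.
Qed.
End H.

Lemma zstar_le z m : zstar z m <= z m.
Proof. destruct m; simpl; [lra|apply Rmin_r]. Qed.

Lemma count_lb (P : nat -> Prop) T : (forall r, (T <= r)%nat -> P r) ->
  forall k, (k - T <= count_upto P k)%nat.
Proof. intros HP k. induction k; cbn [count_upto]; [lia|].
  destruct excluded_middle_informative as [p|p]; [lia|].
  destruct (le_lt_dec T (S k)) as [l|l]; [exfalso; apply p, HP; auto|lia]. Qed.

Lemma limsup_bound (u : nat -> R) : Rbar_lt (LimSup_seq u) p_infty ->
  exists C n0, forall n, (n0 <= n)%nat -> u n <= C.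
Proof. intros H. destruct (ex_LimSup_seq u) as [l Hl].
  rewrite (is_LimSup_seq_unique _ _ Hl) in H. destruct l as [l| |]; simpl in H.
  - destruct (Hl (mkposreal 1 Rlt_0_1)) as [_ [N HN]]. exists (l + 1), N. intros n Hn.
    specialize (HN n Hn). simpl in HN. lra.
  - contradiction.
  - destruct (Hl 0) as [N HN]. exists 0, N. intros n Hn. left; auto.
Qed.

Theorem lemma2p6 (phi : R -> R) :
  inc_bij phi ->
  is_lim_seq (fun n => sum_f_R0
      (fun j => / Rmax 1 (ln (geninv phi (INR (S j))))) n) p_infty ->
  exists (psi : R -> R) (a : nat -> nat),
    inc_bij psi /\
    (forall x, 0 <= x -> psi x <= phi x) /\
    (forall x, 0 <= x -> psi x <= sqrt x) /\
    (forall n, (a n < a (S n))%nat) /\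
    is_lim_seq (fun j => INR (a (S j)) - INR (a j)) p_infty /\
    is_lim_seq (fun n => sum_f_R0
      (fun j => / Rmax 1 (ln (geninv psi (INR (a (S j)))))) n) p_infty /\
    forall z : nat -> R,
      (forall n, 0 < z n) ->
      Rbar_lt (LimSup_seq (fun n => exp (phi (INR n)) * z n)) p_infty ->
      Rbar_le (Finite (1/2))
        (LimInf_seq (fun k => INR (count_upto (fun r => good psi z (a r)) k) / INR k)).
Proof. intros Hphi Hsum.
  destruct (construct_a (hh phi) (hh_pos phi) (hh_dec phi Hphi) (hh_unb phi Hphi Hsum))
    as [a [Ha1 [Ha2 Ha3]]].
  assert (Hage : forall r, (r <= a r)%nat).
  { induction r; [lia|]. specialize (Ha1 r). lia. }
  exists (mkpsi phi), a. split; [apply psi_bij; auto|]. split; [intros; apply psi_le_phi|].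
  split; [intros; apply psi_le_sqrt; auto|]. split; auto. split; auto. split.
  - assert (Hcmp : forall n, sum_f_R0 (fun j => hh phi (a (S j))) n <= 3 * sum_f_R0
      (fun j => / Rmax 1 (ln (geninv (mkpsi phi) (INR (a (S j)))))) n).
    { assert (Ht : forall j, hh phi (a (S j)) <= 3 * / Rmax 1 (ln (geninv (mkpsi phi) (INR (a (S j)))))).
      { intros j. rewrite geninv_psi by (auto; apply pos_INR).
        pose proof (term_bound phi Hphi (a (S j)) ltac:(specialize (Hage (S j)); lia)). lra. }
      induction n; cbn [sum_f_R0]. apply Ht. pose proof (Ht (S n)). lra. }
    apply is_lim_seq_spec. apply is_lim_seq_spec in Ha3. intros M.
    destruct (Ha3 (3 * M)) as [N HN]. exists N. intros n Hn. specialize (HN n Hn).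
    specialize (Hcmp n). lra.
  - intros z Hz Hls.
    destruct (limsup_bound _ Hls) as [C [n0 HC]].
    set (C' := Rmax C 1).
    set (c := S (nfl (Rabs (1 + ln C')))).
    assert (Hc : 1 + ln C' <= INR c).
    { unfold c. rewrite S_INR. destruct (nfl_spec (Rabs (1 + ln C'))) as [A B]; [apply Rabs_pos|].
      pose proof (Rle_abs (1 + ln C')). lra. }
    set (T := (c + n0 + 1 + Z.to_nat (k0 z))%nat).
    assert (Hgood : forall k, (T <= k)%nat -> good (mkpsi phi) z k).
    { intros k Hk. set (Pk := geninv phi (INR k + INR c)).
      assert (HPk : 0 <= Pk) by (apply geninv_spec; auto; pose proof (pos_INR k); pose proof (pos_INR c); lra).
      destruct (nfl_spec Pk HPk) as [F1 F2].
      apply good_scale with (K := (n0 + nfl Pk)%nat).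
      + intros m Hm1 Hm. destruct (le_lt_dec n0 m) as [Hn0|Hn0]; [|lia].
        assert (Hzm : exp (phi (INR m)) * z m <= C') by (eapply Rle_trans; [apply HC; auto|apply Rmax_l]).
        pose proof (zstar_le z m).
        assert (HC'0 : 0 < C') by (unfold C'; pose proof (Rmax_r C 1); lra).
        assert (E1 : exp (phi (INR m) - (INR k + 1)) <= C').
        { rewrite Rminus_def, exp_plus. pose proof (exp_pos (phi (INR m))). nra. }
        assert (E2 : phi (INR m) - (INR k + 1) <= ln C').
        { rewrite <- (ln_exp (phi (INR m) - (INR k + 1))). apply ln_le; auto. apply exp_pos. }
        assert (E3 : INR m <= Pk).
        { apply geninv_le; auto. pose proof (pos_INR k); pose proof (pos_INR c); lra. apply pos_INR. lra. }
        assert (INR m < INR (S (nfl Pk))) by (rewrite S_INR; lra).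
        apply INR_lt in H0. lia.
      + assert (Z.to_nat (k0 z) <= k)%nat by lia. lia.
      + lia.
      + rewrite geninv_psi by (auto; apply pos_INR). unfold Gf.
        set (q := geninv phi (2 * INR k)).
        pose proof (pos_INR k) as Hk0. pose proof (pos_INR c) as Hc0.
        assert (Hy1 : INR (S n0) <= INR k) by (apply le_INR; lia).
        assert (Hyc : INR c <= INR k) by (apply le_INR; lia).
        assert (Hq : Pk <= q) by (unfold Pk, q; apply geninv_mono; auto; lra).
        assert (Hq0 : 0 <= q) by lra.
        rewrite S_INR, plus_INR.
        assert (INR n0 + INR (nfl Pk) + 1 <= INR k + q) by (rewrite S_INR in Hy1; lra).
        assert ((INR n0 + INR (nfl Pk) + 1) * INR k <= (INR k + q) * INR k) by (apply Rmult_le_compat_r; lra).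
        eapply Rle_trans; [apply H0|].
        eapply Rle_trans; [|apply Rmax_r].
        destruct (Rle_dec q (INR k)).
        * eapply Rle_trans; [|apply Rmax_l]. nra.
        * eapply Rle_trans; [|apply Rmax_r]. nra. }
    rewrite <- (LimInf_seq_const (1/2)).
    apply LimInf_le. exists (S (2 * T)). intros k Hk.
    assert (Hcnt := count_lb (fun r => good (mkpsi phi) z (a r)) T
      (fun r Hr => Hgood (a r) ltac:(specialize (Hage r); lia)) k).
    apply le_INR in Hcnt. rewrite minus_INR in Hcnt by lia.
    assert (INR (S (2 * T)) <= INR k) by (apply le_INR; auto).
    rewrite S_INR, mult_INR in H. simpl (INR 2) in H.
    pose proof (pos_INR T).
    apply Rmult_le_reg_r with (INR k); [lra|]. unfold Rdiv. rewrite (Rmult_assoc (INR _)), Rinv_l by lra. lra.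
Qed.
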